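(* Let $D\mapsto f_D\in\mathbb{H}$ be a functional summary on a collection $\mathcal{D}$ of datasets, and suppose there exist adjacent datasets $D_1,D_2\in\mathcal{D}$ with $f_{D_1}-f_{D_2}\in\mathcal{H}_C\setminus\mathcal{H}_{1,C}$. Let $Z$ be an ICLP with mean $0$ and covariance operator $C$. Then for every $\epsilon>0$ there is no $\sigma>0$ such that the mechanism $D\mapsto f_D+\sigma Z$ satisfies $\epsilon$-differential privacy.
   Context: $\mathbb{H}$ is a real separable infinite-dimensional Hilbert space. $C$ is a covariance operator on $\mathbb{H}$ with eigenvalues $\lambda_1\ge\lambda_2\ge\dots>0$ and eigenvectors $\{\phi_j\}_{j\ge1}$ forming an orthonormal basis of $\mathbb{H}$; $h_j=\langle h,\phi_j\rangle$. $\|h\|_C=(\sum_j h_j^2/\lambda_j)^{1/2}$, $\mathcal{H}_C=\{h:\|h\|_C<\infty\}$, $\|h\|_{1,C}=\sum_j|h_j|/\sqrt{\lambda_j}$, $\mathcal{H}_{1,C}=\{h:\|h\|_{1,C}<\infty\}\subseteq\mathcal{H}_C$. An ICLP with mean $\mu$ and covariance operator $C$ is the random element $\mu+\sum_{j\ge1}\sqrt{\lambda_j}Z_j\phi_j$ (series converging in $L^2(\Omega;\mathbb{H})$), where $Z_j$ are i.i.d. Laplace with mean $0$ and variance $1$, i.e. with density $\frac1{\sqrt2}e^{-\sqrt2|x|}$. Datasets $D,D'$ are adjacent if they differ in exactly one record. For a mechanism releasing the random element $\tilde f_D$, let $P_D$ be its law on the Borel $\sigma$-algebra of $\mathbb{H}$;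 the mechanism is $\epsilon$-differentially private if $P_D(A)\le e^{\epsilon}P_{D'}(A)$ for all adjacent $D,D'$ and all Borel $A\subseteq\mathbb{H}$. *)

(* Defs.v *)
From HB Require Import structures.
From mathcomp Require Import all_boot all_order all_algebra.
From mathcomp Require Import all_classical all_reals all_analysis.
Set Implicit Arguments. Unset Strict Implicit. Unset Printing Implicit Defensive.
Import Order.TTheory GRing.Theory Num.Theory.
Import numFieldNormedType.Exports.
Local Open Scope classical_set_scope.
Local Open Scope ring_scope.

(* The Hilbert space H is represented in the coordinates h_j = <h, phi_j>
   w.r.t. the eigenbasis (phi_j) of C, i.e. as l^2(N). *)

Section Defs.
Variable R : realType.

Definition in_l2 (x : nat -> R) : Prop :=
  (\sum_(0 <= j <oo) ((x j) ^+ 2)%:E < +oo)%E.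

Definition l2set : set (nat -> R) := [set x | in_l2 x].

Definition l2open : set (set (nat -> R)) :=
  [set A | A `<=` l2set /\
    forall x, A x -> exists r : R, 0 < r /\
      forall y, in_l2 y ->
        (\sum_(0 <= j <oo) ((x j - y j) ^+ 2)%:E < (r ^+ 2)%:E)%E -> A y].

Definition l2Borel : set (set (nat -> R)) := <<s l2set, l2open >>.

Definition in_HC (lam : nat -> R) (h : nat -> R) : Prop :=
  in_l2 h /\ (\sum_(0 <= j <oo) ((h j) ^+ 2 / lam j)%:E < +oo)%E.

Definition in_H1C (lam : nat -> R) (h : nat -> R) : Prop :=
  in_l2 h /\ (\sum_(0 <= j <oo) (`|h j| / Num.sqrt (lam j))%:E < +oo)%E.

Definition cov_eigenvalues (lam : nat -> R) : Prop :=
  (forall j, 0 < lam j) /\ (forall j, lam j.+1 <= lam j) /\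
  (\sum_(0 <= j <oo) (lam j)%:E < +oo)%E.

(* Laplace density with mean 0 and variance 1 *)
Definition laplace_pdf (x : R) : R :=
  (Num.sqrt 2)^-1 * expR (- (Num.sqrt 2 * `|x|)).

Definition iid_laplace d (Omega : measurableType d) (P : probability Omega R)
  (Z : nat -> Omega -> R) : Prop :=
  (forall j, measurable_fun setT (Z j)) /\
  (forall j (B : set R), measurable B ->
     P (Z j @^-1` B) = (\int[@lebesgue_measure R]_(x in B) (laplace_pdf x)%:E)%E) /\
  (forall (I : seq nat) (B : nat -> set R), uniq I ->
     (forall i, measurable (B i)) ->
     P (\bigcap_(i in [set i | i \in I]) (Z i @^-1` B i)) =
     (\big[*%E/1%E]_(i <- I) P (Z i @^-1` B i))%E).

(* the ICLP  sum_j sqrt(lam_j) Z_j phi_j, in coordinates *)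
Definition iclp0 d (Omega : measurableType d) (lam : nat -> R)
  (Z : nat -> Omega -> R) (w : Omega) : nat -> R :=
  fun j => Num.sqrt (lam j) * Z j w.

Definition adjacent_datasets (Rec : eqType) (D D' : seq Rec) : Prop :=
  size D = size D' /\ count (fun p => p.1 != p.2) (zip D D') = 1%N.

Definition eps_DP (Rec : eqType) d (Omega : measurableType d)
  (P : probability Omega R) (Dc : set (seq Rec))
  (M : seq Rec -> Omega -> (nat -> R)) (eps : R) : Prop :=
  forall D D', Dc D -> Dc D' -> adjacent_datasets D D' ->
  forall A, l2Borel A ->
    (P (M D @^-1` A) <= (expR eps)%:E * P (M D' @^-1` A))%E.

End Defs.

(* Main.v *)
Require Import Defs.
From HB Require Import structures.
From mathcomp Require Import all_boot all_order all_algebra.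
From mathcomp Require Import all_classical all_reals all_analysis.
From mathcomp Require Import ring lra zify.
Import measurable_realfun.
Import Order.TTheory GRing.Theory Num.Theory.
Import numFieldNormedType.Exports.
Local Open Scope classical_set_scope.
Local Open Scope ring_scope.

Section A.
Variable R : realType.
Local Notation s := (Num.sqrt (2:R)).

Lemma s_gt0 : 0 < s. Proof. by rewrite sqrtr_gt0. Qed.
Lemma s_sq : s * s = 2. Proof. by rewrite -expr2 sqr_sqrtr. Qed.

Lemma pdf_ge0 (x : R) : 0 <= laplace_pdf x.
Proof. by rewrite /laplace_pdf mulr_ge0 ?expR_ge0 // invr_ge0 sqrtr_ge0. Qed.

Lemma pdfN (x : R) : laplace_pdf (- x) = laplace_pdf x.
Proof. by rewrite /laplace_pdf normrN. Qed.

Lemma pdf_cont : continuous (@laplace_pdf R).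
Proof.
move=> x; apply: (@continuousM _ R^o (fun=> _) (fun x => expR (- (s * `|x|)))).
  exact: cst_continuous.
apply: continuous_comp; last exact: continuous_expR.
apply: (@continuousN _ R^o).
apply: (@continuousM _ R^o (fun=> _) (fun x => `|x|)); first exact: cst_continuous.
exact: norm_continuous.
Qed.

Let F (x : R) := - (expR (- (s * x)) / 2).

Let dF (x : R) : 0 < x -> is_derive x 1 F (laplace_pdf x).
Proof.
move=> x0.
have h1 : is_derive x 1 (fun y : R => - (s * y)) (- (s *: 1)).
  exact: is_deriveN (is_deriveZ s (is_derive_id x 1)).
have h2 := is_derive1_comp (is_derive_expR _) h1.
have h3 : is_derive x 1 F (- (2^-1 *: (expR (- (s * x)) * - (s *: 1)))).
  apply: is_deriveN.
  have h4 := is_deriveZ (2^-1) h2.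
  have -> : (fun x => expR (- (s * x)) / 2) = (2^-1 \*: (expR \o (fun y : R => - (s * y)))).
    by apply/funext => y /=; rewrite mulrC.
  exact: h4.
suff -> : laplace_pdf x = - (2^-1 *: (expR (- (s * x)) * - (s *: 1))) by [].
rewrite /laplace_pdf gtr0_norm //.
have -> : ((s%:A) : R) = s by rewrite /GRing.scale /= mulr1.
have sn0 : s != 0 by rewrite gt_eqF // s_gt0.
have e : (2:R)^-1 = s^-1 * s^-1 by rewrite -invfM s_sq.
rewrite e /GRing.scale /=.
by field.
Qed.

Lemma int_tail (t : R) : 0 <= t ->
  (\int[lebesgue_measure]_(x in `[t, +oo[) (laplace_pdf x)%:E =
   (expR (- (s * t)) / 2)%:E)%E.
Proof.
move=> t0.
have cF : continuous F.
  move=> y.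
  have c1 : {for y, continuous (fun y : R => expR (- (s * y)))}.
    apply: continuous_comp; last exact: continuous_expR.
    apply: (@continuousN _ R^o).
    by apply: (@continuousM _ R^o (fun=> s) id); [exact: cst_continuous|].
  have c3 : {for y, continuous (fun=> (2^-1 : R))} by exact: cst_continuous.
  have c2 := @continuousM _ R^o (fun y : R => expR (- (s * y))) (fun=> 2^-1) y c1 c3.
  exact: (@continuousN _ R^o _ _ y c2).
rewrite (@ge0_continuous_FTC2y _ _ F t 0).
- by rewrite /F EFinN oppeK add0e.
- by move=> x _; exact: pdf_ge0.
- exact/continuous_subspaceT/pdf_cont.
- rewrite /F -[X in _ --> X]oppr0; apply: cvgN.
  rewrite -[X in _ --> X](mul0r (2^-1 : R)).
  apply: cvgMl.
  rewrite (_ : (fun x => expR (- (s * x))) =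
               (fun z => expR (- z)) \o (fun z => s * z)); last first.
    by apply: funext.
  apply: (@cvg_comp _ _ _ _ _ _ (pinfty_nbhs R)); last exact: cvgr_expR.
  by apply: gt0_cvgMry; [exact: s_gt0|exact: cvg_id].
- move=> x tx; have h := dF x (le_lt_trans t0 tx).
  by case: h.
- by apply: cvg_at_right_filter; apply: cF.
- move=> x; rewrite in_itv /= andbT => tx.
  have := dF x (le_lt_trans t0 tx).
  by move=> h; rewrite derive1E derive_val.
Qed.

Lemma int_tailN (t : R) : 0 <= t ->
  (\int[lebesgue_measure]_(x in `]-oo, (- t)%R]) (laplace_pdf x)%:E =
   (expR (- (s * t)) / 2)%:E)%E.
Proof.
move=> t0; rewrite ge0_integration_by_substitutionNy.
- rewrite -int_tail //; apply: eq_integral => x _ /=.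
  by rewrite pdfN.
- exact/continuous_subspaceT/pdf_cont.
- by move=> x _; exact: pdf_ge0.
Qed.

Lemma sum_odd (n : nat) : \sum_(0 <= k < n) ((2 * k + 1)%:R : R) = (n ^ 2)%:R.
Proof.
elim: n => [|n IH]; first by rewrite big_nil.
rewrite big_nat_recr //= IH -natrD; congr (_%:R).
by rewrite !expnS expn0 !muln1; lia.
Qed.

Lemma layer (y : R) : 0 <= y ->
  ((y ^+ 2)%:E <= \sum_(0 <= k <oo) (((2 * k + 1)%:R * ((k%:R <= y)%R)%:R)%:E))%E.
Proof.
move=> y0; have /andP[hm1 hm2] := truncn_itv y0.
set m := Num.trunc y in hm1 hm2.
apply: (@le_trans _ _ (\sum_(0 <= k < m.+1) (((2 * k + 1)%:R * ((k%:R <= y)%R)%:R)%:E))%E); last first.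
  by apply: nneseries_lim_ge => k _ _; rewrite lee_fin mulr_ge0.
rewrite sumEFin lee_fin.
rewrite (eq_big_nat _ _ (F2 := fun k => ((2 * k + 1)%:R : R))); last first.
  move=> k /andP[_ hk].
  have -> : (k%:R <= y) = true.
    by apply: le_trans hm1; rewrite ler_nat -ltnS.
  by rewrite mulr1.
rewrite sum_odd natrX.
by rewrite lerXn2r ?nnegrE // ltW.
Qed.

Lemma term_bound (k : nat) :
  (2 * k + 1)%:R * expR (- (s * (2 * k)%:R)) <= 4 / (2 ^ (k + 1))%:R.
Proof.
have -> : s * (2 * k)%:R = k%:R * (2 * s) by rewrite natrM; ring.
rewrite expRN expRM_natl.
set E := expR (2 * s).
have E4 : 4 <= E.
  apply: le_trans (expR_ge1Dxn 1 (_ : 0 <= 2 * s)); last by rewrite mulr_ge0 // ltW // s_gt0.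
  rewrite exprMn [s ^+ 2]expr2 s_sq /= (_ : (2`!)%:R = 2 :> R) //.
  have -> : (2:R) ^+ 2 * 2 / 2 = 4 by rewrite mulfK //; ring.
  by rewrite lerDr.
have E0 : 0 < E by rewrite /E expR_gt0.
have h1 : ((2 * k + 1)%:R : R) <= (2 ^ (k + 1))%:R.
  rewrite ler_nat; elim: k => [//|k IH].
  move: IH; rewrite !addn1 !expnS; lia.
have h2 : (E ^+ k)^-1 <= ((4:R) ^+ k)^-1.
  rewrite lef_pV2 ?posrE ?exprn_gt0 //.
  by rewrite lerXn2r ?nnegrE // ltW.
apply: le_trans (ler_pM _ _ h1 h2) _.
- by rewrite ler0n.
- by rewrite invr_ge0 exprn_ge0 // ltW.
rewrite natrX.
have e : (4:R) ^+ k = 2 ^+ k * 2 ^+ k.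
  by rewrite -exprMn; congr (_ ^+ _); ring.
have h2k : (2:R) ^+ k != 0 by rewrite expf_eq0 pnatr_eq0 andbF.
rewrite e exprD expr1 le_eqVlt; apply/orP; left; apply/eqP.
by field.
Qed.

Lemma term_le_series (u : nat -> R) j :
  (((u j) ^+ 2)%:E <= \sum_(0 <= k <oo) ((u k) ^+ 2)%:E)%E.
Proof.
rewrite (@nneseriesD1 _ _ j xpredT) //; last by move=> k _; rewrite lee_fin sqr_ge0.
by rewrite leeDl //; apply: nneseries_ge0 => k _ _; rewrite lee_fin sqr_ge0.
Qed.

Lemma openO (j : nat) (b : bool) (c : R) :
  @l2open R (@l2set R `&` [set y | if b then y j < c else c < y j]).
Proof.
split; first exact: subIsetl.
move=> x [lx hx].
have [r [r0 hr]] : exists r, 0 < r /\ (forall z, `|x j - z| < r -> if b then z < c else c < z).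
  case: b hx => /= hx.
    exists (c - x j); split; first by rewrite subr_gt0.
    by move=> z; rewrite ltr_norml => /andP[h1 h2]; lra.
  exists (x j - c); split; first by rewrite subr_gt0.
  by move=> z; rewrite ltr_norml => /andP[h1 h2]; lra.
exists r; split => // y ly hxy; split => //=; apply: hr.
have hj := le_lt_trans (term_le_series (fun k => x k - y k) j) hxy.
rewrite lte_fin in hj.
by rewrite -(ltr_pXn2r (n:=2)) // ?nnegrE ?ltW // real_normK // num_real.
Qed.

Lemma borelA (n : nat) (b : nat -> bool) (c : nat -> R) :
  @l2Borel R (@l2set R `&` [set y | forall j, (j < n)%N -> if b j then c j <= y j else y j <= c j]).
Proof.
pose O k := if (k < n)%N then @l2set R `&` [set y : nat -> R | if b k then y k < c k else c k < y k] else set0.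
have -> : @l2set R `&` [set y | forall j, (j < n)%N -> if b j then c j <= y j else y j <= c j] =
          @l2set R `\` \bigcup_k O k.
  apply/seteqP; split => y /=.
    move=> [ly hy]; split => // -[k _]; rewrite /O.
    case: ifP => kn //= [_]; have := hy k kn.
    by case: (b k) => h1 h2; lra.
  move=> [ly hy]; split => // j jn.
  have : ~ O j y by move=> h; apply: hy; exists j.
  rewrite /O jn /= => h.
  case: (b j) h => h.
    by rewrite leNgt; apply/negP => h'; apply: h.
  by rewrite leNgt; apply/negP => h'; apply: h.
apply: sigma_algebraCD; apply: sigma_algebra_bigcup => k.
rewrite /O; case: ifP => _.
  by apply: sub_sigma_algebra; exact: openO.
exact: sigma_algebra0.
Qed.

Section B.
Variables (d : measure_display) (Omega : measurableType d) (P : probability Omega R).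
Variable Z : nat -> Omega -> R.
Hypothesis hZ : iid_laplace P Z.

Lemma PZ_ge j (t : R) : 0 <= t ->
  P (Z j @^-1` `[t, +oo[%classic) = (expR (- (s * t)) / 2)%:E.
Proof.
move=> t0; rewrite (hZ.2.1 j) //; exact: int_tail.
Qed.

Lemma PZ_le j (t : R) : 0 <= t ->
  P (Z j @^-1` `]-oo, (- t)%R]%classic) = (expR (- (s * t)) / 2)%:E.
Proof.
move=> t0; rewrite (hZ.2.1 j) //; exact: int_tailN.
Qed.

Lemma mZpre j (B : set R) : measurable B -> measurable (Z j @^-1` B).
Proof.
move=> mB; rewrite -(setTI (Z j @^-1` B)); exact: (hZ.1 j) measurableT _ mB.
Qed.

Definition Ak (j k : nat) := Z j @^-1` [set x : R | k%:R <= `|x| / 2].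

Lemma set_abs (t : R) : [set x : R | t <= `|x|] =
   `]-oo, (- t)%R]%classic `|` `[t, +oo[%classic.
Proof.
apply/seteqP; split => x /=; rewrite !in_itv /= ?andbT.
  rewrite ler_normr; case/orP=> h1.
    by right.
  by left; rewrite lerNr.
case=> h; rewrite ler_normr; apply/orP.
  by right; rewrite lerNr.
by left.
Qed.

Lemma setAk (k : nat) : [set x : R | k%:R <= `|x| / 2] =
   `]-oo, (- (2 * k)%:R)%R]%classic `|` `[(2 * k)%:R, +oo[%classic.
Proof.
rewrite -set_abs; apply/seteqP; split => x /=; rewrite natrM => h; lra.
Qed.

Lemma mAk j k : measurable (Ak j k).
Proof. by rewrite /Ak setAk; apply: mZpre; apply: measurableU. Qed.

Lemma PZ_abs j k : (P (Ak j k) <= (expR (- (s * (2 * k)%:R)))%:E)%E.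
Proof.
rewrite /Ak setAk preimage_setU.
have e1 := @PZ_ge j ((2 * k)%:R) (ler0n R (2 * k)).
have e2 := @PZ_le j ((2 * k)%:R) (ler0n R (2 * k)).
apply: (@le_trans _ _ (P (Z j @^-1` `]-oo, (- (2*k)%:R)%R]%classic) + P (Z j @^-1` `[((2*k)%:R : R), +oo[%classic))%E).
  exact: (measureU2 P (mZpre j _ (measurable_itv _)) (mZpre j _ (measurable_itv _))).
rewrite e1 e2.
rewrite -EFinD lee_fin.
by rewrite -splitr.
Qed.

Lemma geom4 : (\sum_(0 <= k <oo) ((4:R) / (2 ^ (k + 1))%:R)%:E = 4%:E)%E.
Proof.
have := @cvg_geometric_eseries_half R 4 0.
by rewrite expr0 divr1 => /cvg_lim <-.
Qed.

Lemma indAk j k w : (\1_(Ak j k) w : R) = ((k%:R <= `|Z j w| / 2)%R)%:R.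
Proof.
rewrite indicE /Ak; congr (_%:R).
case: (boolP (k%:R <= `|Z j w| / 2)) => h.
  by rewrite mem_set.
by rewrite memNset //=; apply/negP.
Qed.

Lemma mZ2 j : measurable_fun setT (fun w => ((Z j w) ^+ 2)%:E).
Proof. by apply/measurable_EFinP; apply: measurable_funX; exact: (hZ.1 j). Qed.

Lemma intZ2 j : (\int[P]_w ((Z j w) ^+ 2)%:E <= 16%:E)%E.
Proof.
pose f (k : nat) w := (((2 * k + 1)%:R : R) * \1_(Ak j k) w)%:E.
have mf k : measurable_fun setT (f k).
  apply/measurable_EFinP.
  apply: measurable_funM; first exact: measurable_cst.
  exact: measurable_indic (mAk j k).
have f0 k w : (0 <= f k w)%E.
  by rewrite lee_fin mulr_ge0 // indicE.
apply: (@le_trans _ _ (\int[P]_w (4%:E * \sum_(0 <= k <oo) f k w))%E).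
  apply: ge0_le_integral => //.
  - by move=> w _; rewrite lee_fin sqr_ge0.
  - exact: mZ2.
  - apply: measurable_funeM.
    by apply: ge0_emeasurable_sum => // k w _ _.
  - move=> w _.
    have -> : (Z j w) ^+ 2 = 4 * (`|Z j w| / 2) ^+ 2.
      by rewrite exprMn -real_normK ?num_real //; field.
    rewrite EFinM; apply: lee_pmul => //.
    have y0 : 0 <= `|Z j w| / 2 by rewrite divr_ge0.
    apply: (@le_trans _ _ (\sum_(0 <= k <oo) ((((2 * k + 1)%:R : R) * ((k%:R <= `|Z j w| / 2)%R)%:R)%:E))%E).
      exact: layer y0.
    apply: lee_nneseries.
      by move=> k _ _; rewrite lee_fin mulr_ge0.
    by move=> k _; rewrite /f indAk.
rewrite ge0_integralZl_EFin //; last first.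
  - by apply: ge0_emeasurable_sum => // k w _ _.
  - by move=> w _; apply: nneseries_ge0.
rewrite integral_nneseries //.
apply: (@le_trans _ _ (4%:E * \sum_(0 <= k <oo) ((4:R) / (2 ^ (k + 1))%:R)%:E))%E; last first.
  by rewrite geom4 -EFinM lee_fin; lra.
apply: lee_pmul => //.
  by apply: nneseries_ge0 => k _ _; apply: integral_ge0.
apply: lee_nneseries.
  by move=> k _ _; apply: integral_ge0.
move=> k _; rewrite /f.
under eq_integral do rewrite EFinM.
have mI : measurable_fun setT (fun w => (\1_(Ak j k) w : R)%:E).
  by apply/measurable_EFinP; exact: measurable_indic (mAk j k).
rewrite (ge0_integralZl_EFin _ _ _ mI) //.
rewrite integral_indic ?setIT //; last exact: mAk.
apply: (@le_trans _ _ (((2 * k + 1)%:R * expR (- (s * (2 * k)%:R)))%:E))%E; last first.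
  by rewrite lee_fin; exact: term_bound.
rewrite EFinM; apply: lee_pmul => //.
exact: PZ_abs.
Qed.

Section C.
Variable lam : nat -> R.
Hypothesis hlam : cov_eigenvalues lam.

Definition V w := (\sum_(0 <= j <oo) ((lam j)%:E * ((Z j w) ^+ 2)%:E))%E.

Lemma lam_ge0 j : 0 <= lam j. Proof. exact: ltW (hlam.1 j). Qed.

Lemma mV : measurable_fun setT V.
Proof.
apply: ge0_emeasurable_sum.
  by move=> k w _ _; rewrite -EFinM lee_fin mulr_ge0 ?lam_ge0 ?sqr_ge0.
by move=> k _; apply: measurable_funeM; exact: mZ2.
Qed.

Lemma intV : (\int[P]_w V w < +oo)%E.
Proof.
rewrite /V integral_nneseries //; last 2 first.
  by move=> k; apply: measurable_funeM; exact: mZ2.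
  by move=> k w _; rewrite -EFinM lee_fin mulr_ge0 ?lam_ge0 ?sqr_ge0.
apply: (@le_lt_trans _ _ (\sum_(0 <= j <oo) (16%:E * (lam j)%:E)))%E.
  apply: lee_nneseries.
    move=> k _ _; apply: integral_ge0 => w _.
    by rewrite -EFinM lee_fin mulr_ge0 ?lam_ge0 ?sqr_ge0.
  move=> k _.
  have h0 : forall w, setT w -> (0 <= ((Z k w) ^+ 2)%:E)%E.
    by move=> w _; rewrite lee_fin sqr_ge0.
  rewrite (ge0_integralZl_EFin _ _ h0 (mZ2 k) (lam_ge0 k)) //.
  rewrite muleC; apply: lee_pmul => //.
    by apply: integral_ge0 => w _; rewrite lee_fin sqr_ge0.
    by rewrite lee_fin lam_ge0.
  exact: intZ2.
rewrite nneseriesZl; last by move=> k _; rewrite lee_fin lam_ge0.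
apply: lte_mul_pinfty => //.
exact: hlam.2.2.
Qed.

Lemma Vfin : {ae P, forall w, setT w -> V w \is a fin_num}.
Proof.
apply: integrable_ae => //.
apply/integrableP; split; first exact: mV.
have Vge0 w : (0 <= V w)%E.
  by apply: nneseries_ge0 => k _ _; rewrite -EFinM lee_fin mulr_ge0 ?lam_ge0 ?sqr_ge0.
under eq_integral => w _ do rewrite (gee0_abs (Vge0 w)).
exact: intV.
Qed.

Definition Y (g : nat -> R) (sigma : R) w := fun j => g j + sigma * iclp0 lam Z w j.

Lemma Yl2 g sigma w : in_l2 g -> V w \is a fin_num -> in_l2 (Y g sigma w).
Proof.
move=> hg hV; rewrite /in_l2.
apply: (@le_lt_trans _ _ (\sum_(0 <= j <oo) (2%:E * ((g j) ^+ 2)%:E +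
   (2 * sigma ^+ 2)%:E * ((lam j)%:E * ((Z j w) ^+ 2)%:E))))%E.
  apply: lee_nneseries.
    by move=> k _ _; rewrite lee_fin sqr_ge0.
  move=> k _; rewrite -!EFinM -EFinD lee_fin /Y /iclp0.
  have e : (sigma * (Num.sqrt (lam k) * Z k w)) ^+ 2 = sigma ^+ 2 * (lam k * (Z k w) ^+ 2).
    by rewrite !exprMn sqr_sqrtr ?lam_ge0.
  rewrite -mulrA -e.
  set a := g k; set b := sigma * (Num.sqrt (lam k) * Z k w).
  rewrite -subr_ge0.
  have -> : 2 * a ^+ 2 + 2 * b ^+ 2 - (a + b) ^+ 2 = (a - b) ^+ 2 by ring.
  exact: sqr_ge0.
rewrite nneseriesD; last 2 first.
  by move=> k _ _; apply: mule_ge0 => //; rewrite lee_fin sqr_ge0.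
  move=> k _ _; rewrite -!EFinM lee_fin.
  apply: mulr_ge0; apply: mulr_ge0; rewrite ?lam_ge0 ?sqr_ge0 //.
rewrite !nneseriesZl; last 2 first.
  by move=> k _; rewrite -!EFinM lee_fin; apply: mulr_ge0; rewrite ?lam_ge0 ?sqr_ge0.
  by move=> k _; rewrite lee_fin sqr_ge0.
apply: lte_add_pinfty; apply: lte_mul_pinfty => //.
- by rewrite lee_fin mulr_ge0 ?sqr_ge0.
- by rewrite ltey_eq; rewrite /V in hV; rewrite hV.
Qed.

Lemma mG g sigma : measurable [set w | in_l2 (Y g sigma w)].
Proof.
pose H w := (\sum_(0 <= j <oo) ((Y g sigma w j) ^+ 2)%:E)%E.
have mH : measurable_fun setT H.
  apply: ge0_emeasurable_sum.
    by move=> k w _ _; rewrite lee_fin sqr_ge0.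
  move=> j _; apply/measurable_EFinP; apply: measurable_funX.
  exact: (measurable_funD (measurable_cst _) (measurable_funM (measurable_cst _)
            (measurable_funM (measurable_cst _) (hZ.1 j)))).
have -> : [set w | in_l2 (Y g sigma w)] = setT `&` H @^-1` (~` [set +oo%E]).
  apply/seteqP; split => w /=; rewrite /in_l2 ltey.
    by move=> /eqP h; split.
  by case=> _ /eqP.
by apply: mH => //; apply: measurableC; exact: emeasurable_set1.
Qed.

Lemma PEG g sigma E : in_l2 g -> measurable E ->
  P (E `&` [set w | in_l2 (Y g sigma w)]) = P E.
Proof.
move=> hg mE; apply/eqP; rewrite eq_le; apply/andP; split.
  by apply: le_measure; rewrite ?inE //; exact: measurableI (mG _ _).
have [N [mN PN0 sub]] := Vfin.
apply: (@le_trans _ _ (P ((E `&` [set w | in_l2 (Y g sigma w)]) `|` N))).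
  apply: le_measure; rewrite ?inE //; first by apply: measurableU => //; exact: measurableI (mG _ _).
  move=> w Ew.
  have [h|h] := pselect (in_l2 (Y g sigma w)); first by left.
  right; apply: sub => /= hV; apply: h; apply: Yl2 => //; exact: hV.
apply: (@le_trans _ _ (P (E `&` [set w | in_l2 (Y g sigma w)]) + P N)%E).
  exact: (measureU2 P (measurableI _ _ mE (mG g sigma)) mN).
by rewrite PN0 adde0.
Qed.

Definition cond (n : nat) (b : nat -> bool) (c : nat -> R) (y : nat -> R) :=
  forall j, (j < n)%N -> if b j then c j <= y j else y j <= c j.

Definition Bset (bb : bool) (t : R) : set R :=
  if bb then `[t, +oo[%classic else `]-oo, t]%classic.

Lemma mBset bb t : measurable (Bset bb t).
Proof. by rewrite /Bset; case: bb. Qed.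

Lemma event_eq n b c g sigma : 0 < sigma ->
  [set w | cond n b c (Y g sigma w)] =
  \bigcap_(i in [set i | i \in iota 0 n])
     (Z i @^-1` Bset (b i) ((c i - g i) / (sigma * Num.sqrt (lam i)))).
Proof.
move=> sig0.
have key i z : ((if b i then c i <= g i + sigma * (Num.sqrt (lam i) * z)
                else g i + sigma * (Num.sqrt (lam i) * z) <= c i) <->
               Bset (b i) ((c i - g i) / (sigma * Num.sqrt (lam i))) z).
  have a0 : 0 < sigma * Num.sqrt (lam i) by rewrite mulr_gt0 // sqrtr_gt0 (hlam.1 i).
  rewrite /Bset mulrA; case: (b i) => /=; rewrite in_itv /= ?andbT.
    by rewrite ler_pdivrMr // -lerBlDl mulrC.
  by rewrite ler_pdivlMr // -lerBrDl mulrC.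
apply/seteqP; split => w /=.
  move=> hw i; rewrite /= mem_iota add0n => /andP[_ hi].
  by apply/key; apply: hw.
move=> hw j hj; apply/key; apply: hw.
by rewrite /= mem_iota add0n hj.
Qed.

Lemma event_prod n b c g sigma : 0 < sigma ->
  P [set w | cond n b c (Y g sigma w)] =
  (\big[*%E/1%E]_(i <- iota 0 n)
     P (Z i @^-1` Bset (b i) ((c i - g i) / (sigma * Num.sqrt (lam i)))))%E.
Proof.
move=> sig0; rewrite event_eq //.
exact: (hZ.2.2 (iota 0 n) (fun i => Bset (b i) ((c i - g i) / (sigma * Num.sqrt (lam i)))) (iota_uniq 0 n) (fun i => mBset _ _)).
Qed.

Lemma mcond n b c g sigma : 0 < sigma -> measurable [set w | cond n b c (Y g sigma w)].
Proof.
move=> sig0; rewrite event_eq //.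
apply: bigcap_measurableType => i _; apply: mZpre; exact: mBset.
Qed.

Lemma PBt i (bb : bool) t : (if bb then 0 <= t else t <= 0) ->
  P (Z i @^-1` Bset bb t) = (expR (- (s * `|t|)) / 2)%:E.
Proof.
rewrite /Bset; case: bb => ht.
  by rewrite PZ_ge // ger0_norm.
have h := @PZ_le i (- t) (_ : 0 <= - t); rewrite opprK in h.
by rewrite h ?oppr_ge0 // ler0_norm.
Qed.

Lemma main (Rec : eqType) (Dc : set (seq Rec))
  (f : seq Rec -> nat -> R) (hf : forall D, Dc D -> in_l2 (f D))
  (D1 D2 : seq Rec) (hD1 : Dc D1) (hD2 : Dc D2) (hadj : adjacent_datasets D1 D2)
  (hh : (\sum_(0 <= j <oo) (`|f D1 j - f D2 j| / Num.sqrt (lam j))%:E = +oo)%E)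
  (eps : R) (heps : 0 < eps) :
  ~ exists sigma : R, 0 < sigma /\
      eps_DP P Dc (fun D w => fun j => f D j + sigma * iclp0 lam Z w j) eps.
Proof.
move=> [sigma [sig0 hDP]].
pose h j := f D1 j - f D2 j.
have sq0 i : 0 < Num.sqrt (lam i) by rewrite sqrtr_gt0 (hlam.1 i).
have [n hn] : exists n, sigma * eps / s < \sum_(i <- iota 0 n) `|h i| / Num.sqrt (lam i).
  apply: contrapT => hne.
  have : (\sum_(0 <= j <oo) (`|h j| / Num.sqrt (lam j))%:E <= (sigma * eps / s)%:E)%E.
    apply: lime_le.
      by apply: is_cvg_nneseries => k _ _; rewrite lee_fin divr_ge0 // ltW.
    apply: nearW => k.
    rewrite sumEFin lee_fin leNgt; apply/negP => hk; apply: hne; exists k.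
    by rewrite /index_iota subn0 in hk.
  by rewrite hh leye_eq.
pose b j := 0 <= h j.
pose c j := f D1 j.
pose A := @l2set R `&` [set y | cond n b c y].
have pre D : (fun w => fun j => f D j + sigma * iclp0 lam Z w j) @^-1` A =
    [set w | cond n b c (Y (f D) sigma w)] `&` [set w | in_l2 (Y (f D) sigma w)].
  by apply/seteqP; split => w /= [h1 h2]; split.
have hA : (P ([set w | cond n b c (Y (f D1) sigma w)] `&` [set w | in_l2 (Y (f D1) sigma w)])
    <= (expR eps)%:E * P ([set w | cond n b c (Y (f D2) sigma w)] `&` [set w | in_l2 (Y (f D2) sigma w)]))%E.
  rewrite -!pre; exact: (hDP D1 D2 hD1 hD2 hadj A (borelA n b c)).
rewrite (PEG _ _ _ (hf _ hD1) (mcond n b c (f D1) sigma sig0)) in hA.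
rewrite (PEG _ _ _ (hf _ hD2) (mcond n b c (f D2) sigma sig0)) in hA.
rewrite !event_prod // in hA.
have P1 : (\big[*%E/1%E]_(i <- iota 0 n)
     P (Z i @^-1` Bset (b i) ((c i - f D1 i) / (sigma * Num.sqrt (lam i)))) =
     \big[*%E/1%E]_(i <- iota 0 n) ((2:R)^-1)%:E)%E.
  apply: eq_bigr => i _; rewrite /c subrr mul0r PBt.
    by rewrite normr0 mulr0 oppr0 expR0 div1r.
  by case: (b i).
pose t i := `|h i| / (sigma * Num.sqrt (lam i)).
have P2 : (\big[*%E/1%E]_(i <- iota 0 n)
     P (Z i @^-1` Bset (b i) ((c i - f D2 i) / (sigma * Num.sqrt (lam i)))) =
     \big[*%E/1%E]_(i <- iota 0 n) (expR (- (s * t i)) / 2)%:E)%E.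
  apply: eq_bigr => i _.
  have a0 : 0 < sigma * Num.sqrt (lam i) by rewrite mulr_gt0.
  rewrite PBt.
    by rewrite /t normrM normfV (gtr0_norm a0).
  rewrite /b /c -/(h i); case: ifP => hi.
    by rewrite divr_ge0 // ltW.
  by rewrite pmulr_lle0 ?invr_gt0 // ltW // ltNge hi.
rewrite P1 P2 !prodEFin -EFinM lee_fin in hA.
move: hA; rewrite big_split /= -expR_sum.
set q := \prod_(i <- iota 0 n) (2:R)^-1.
have q0 : 0 < q by apply: prodr_gt0 => i _; rewrite invr_gt0.
rewrite mulrA -[X in X <= _]mul1r ler_pM2r // -expRD.
have eS : \sum_(i <- iota 0 n) (- (s * t i)) =
    - (s / sigma) * \sum_(i <- iota 0 n) (`|h i| / Num.sqrt (lam i)).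
  rewrite big_distrr; apply: eq_bigr => i _ /=.
  have := sq0 i; rewrite /t => hs.
  have hs0 : Num.sqrt (lam i) != 0 by rewrite gt_eqF.
  by rewrite invfM; ring.
rewrite eS => h1.
have : expR (eps + - (s / sigma) * \sum_(i <- iota 0 n) (`|h i| / Num.sqrt (lam i))) < 1.
  rewrite expR_lt1.
  have hs := s_gt0.
  move: hn; rewrite ltr_pdivrMr // => hn.
  rewrite mulNr subr_lt0 mulrC mulrA ltr_pdivlMr //.
  by rewrite [X in X < _]mulrC.
by rewrite ltNge h1.
Qed.

End C.

End B.

End A.

Theorem theorem3 (R : realType) (Rec : eqType) (Dc : set (seq Rec))
  (f : seq Rec -> nat -> R) (hf : forall D, Dc D -> in_l2 (f D))
  (lam : nat -> R) (hlam : cov_eigenvalues lam)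
  (D1 D2 : seq Rec) (hD1 : Dc D1) (hD2 : Dc D2) (hadj : adjacent_datasets D1 D2)
  (hC : in_HC lam (fun j => f D1 j - f D2 j))
  (hnC1 : ~ in_H1C lam (fun j => f D1 j - f D2 j))
  (d : measure_display) (Omega : measurableType d) (P : probability Omega R)
  (Z : nat -> Omega -> R) (hZ : iid_laplace P Z)
  (eps : R) (heps : 0 < eps) :
  ~ exists sigma : R, 0 < sigma /\
      eps_DP P Dc
        (fun D w => fun j => f D j + sigma * iclp0 lam Z w j) eps.
Proof.
have hh : (\sum_(0 <= j <oo) (`|f D1 j - f D2 j| / Num.sqrt (lam j))%:E = +oo)%E.
  apply/eqP; apply/negPn/negP => hne; apply: hnC1; split; first exact: hC.1.
  by rewrite ltey.
exact: (@main R d Omega P Z hZ lam hlam Rec Dc f hf D1 D2 hD1 hD2 hadj hh eps heps).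
Qed.
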